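(* Let $\rho\in(0,+\infty)$ and $\xi\in\mathbb{R}$. On $(r,\phi)\in(0,+\infty)\times\mathbb{S}^1$ with conjugate momenta $(P_r,P_\phi)$ consider $$H_0=\frac{1}{2(1+\rho r^2)}\Big(P_r^2+\frac{P_\phi^2}{r^2}+\xi r^2\Big),$$ associated with the metric $g=(1+\rho r^2)(dr^2+r^2d\phi^2)$, and the quadratic functions $$S_1=\cos(2\phi)\,P_r\frac{P_\phi}{r}+\sin(2\phi)\Big(H_0-\frac{P_\phi^2}{r^2}\Big),\qquad S_2=-\sin(2\phi)\,P_r\frac{P_\phi}{r}+\cos(2\phi)\Big(H_0-\frac{P_\phi^2}{r^2}\Big).$$ Then the superintegrable systems $\{H_0,P_\phi,S_1\}$ and $\{H_0,P_\phi,S_2\}$ (the metric and the functions $H_0,P_\phi,S_1,S_2$) are globally defined on a manifold $M$ diffeomorphic to $\mathbb{R}^2$.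
   Context: $(r,\phi)$ are polar coordinates; the manifold is obtained by adding the origin, i.e. using Cartesian coordinates $x_1=r\cos\phi$, $x_2=r\sin\phi$. *)

(* Defs.v *)
From HB Require Import structures.
From mathcomp Require Import all_boot all_order all_algebra.
From mathcomp Require Import all_classical all_reals all_analysis.
Set Implicit Arguments. Unset Strict Implicit. Unset Printing Implicit Defensive.
Import Order.TTheory GRing.Theory Num.Theory.
Import numFieldNormedType.Exports.
Local Open Scope ring_scope.

Fixpoint Ck {R : realType} {V : normedModType R} (k : nat) (f : V -> R) : Prop :=
  match k with
  | O => continuous f
  | S k' => (forall x, differentiable f x) /\ (forall v : V, Ck k' ('D_v f))
  end.

Definition smooth {R : realType} {V : normedModType R} (f : V -> R) : Prop :=
  forall k, Ck k f.

Definition H0 {R : realType} (rho xi r phi Pr Pphi : R) : R :=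
  (Pr ^+ 2 + Pphi ^+ 2 / r ^+ 2 + xi * r ^+ 2) / (2 * (1 + rho * r ^+ 2)).

Definition S1pol {R : realType} (rho xi r phi Pr Pphi : R) : R :=
  cos (2 * phi) * Pr * (Pphi / r)
  + sin (2 * phi) * (H0 rho xi r phi Pr Pphi - Pphi ^+ 2 / r ^+ 2).

Definition S2pol {R : realType} (rho xi r phi Pr Pphi : R) : R :=
  - sin (2 * phi) * Pr * (Pphi / r)
  + cos (2 * phi) * (H0 rho xi r phi Pr Pphi - Pphi ^+ 2 / r ^+ 2).

Definition cart2 {R : realType} (r phi : R) : 'rV[R]_2 :=
  \row_(i < 2) [:: r * cos phi; r * sin phi]`_i.

Definition cartT {R : realType} (r phi p1 p2 : R) : 'rV[R]_4 :=
  \row_(i < 4) [:: r * cos phi; r * sin phi; p1; p2]`_i.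

(* Polar conjugate momenta of the cotangent vector p1 dx1 + p2 dx2
   (canonical cotangent lift of the coordinate change). *)
Definition Pr_of {R : realType} (r phi p1 p2 : R) : R :=
  cos phi * p1 + sin phi * p2.
Definition Pphi_of {R : realType} (r phi p1 p2 : R) : R :=
  r * (- sin phi * p1 + cos phi * p2).

Definition polJac {R : realType} (r phi : R) : 'M[R]_2 :=
  \matrix_(i < 2, j < 2)
    nth 0 (nth [::] [:: [:: cos phi; - r * sin phi]; [:: sin phi; r * cos phi]] i) j.

Definition gpol {R : realType} (rho r : R) : 'M[R]_2 :=
  \matrix_(i < 2, j < 2)
    nth 0 (nth [::] [:: [:: 1 + rho * r ^+ 2; 0]; [:: 0; (1 + rho * r ^+ 2) * r ^+ 2]] i) j.

(* Main.v *)
Require Import Defs.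
From HB Require Import structures.
From mathcomp Require Import all_boot all_order all_algebra.
From mathcomp Require Import all_classical all_reals all_analysis.
Import Order.TTheory GRing.Theory Num.Theory.
Import numFieldNormedType.Exports.
Local Open Scope ring_scope.

From mathcomp Require Import ring lra.
Section CkLemmas.
Context {R : realType} {V : normedModType R}.
Implicit Types f g : V -> R.

Lemma CkS k f : Ck k.+1 f -> Ck k f.
Proof.
elim: k f => [|k IH] f /= [df Df].
  by move=> x; exact: differentiable_continuous.
by split => // v; apply: IH; apply: Df.
Qed.

Lemma Ck_cst k (c : R) : Ck k (fun _ : V => c).
Proof.
elim: k c => [|k IH] c /=; first by move=> x; exact: cvg_cst.
split; first by move=> x; exact: differentiable_cst.
move=> v; rewrite (_ : (fun x => derive (fun _ : V => c) x v) = fun _ => 0); first exact: IH.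
by apply/funext => x; exact: derive_cst.
Qed.

Lemma Ck_add k f g : Ck k f -> Ck k g -> Ck k (fun x => f x + g x).
Proof.
elim: k f g => [|k IH] f g /=.
  by move=> cf cg x; exact: (continuousD (cf x) (cg x)).
move=> [df Df] [dg Dg]; split; first by move=> x; apply: differentiableD.
move=> v; rewrite (_ : 'D_v _ = fun x => 'D_v f x + 'D_v g x); first exact: IH.
by apply/funext => x; apply: deriveD; apply: diff_derivable.
Qed.

Lemma Ck_mul k f g : Ck k f -> Ck k g -> Ck k (fun x => f x * g x).
Proof.
elim: k f g => [|k IH] f g /=.
  by move=> cf cg x; exact: (continuousM (cf x) (cg x)).
move=> [df Df] [dg Dg]; split; first by move=> x; apply: differentiableM.
move=> v; rewrite (_ : 'D_v _ = fun x => f x * 'D_v g x + g x * 'D_v f x).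
  apply: Ck_add; apply: IH => //; apply: CkS; split => //.
by apply/funext => x; apply: deriveM; apply: diff_derivable.
Qed.

Lemma Ck_opp k f : Ck k f -> Ck k (fun x => - f x).
Proof.
move=> cf; rewrite (_ : (fun x => - f x) = fun x => (-1) * f x).
  by apply: Ck_mul => //; apply: Ck_cst.
by apply/funext => x; rewrite mulN1r.
Qed.

Lemma Ck_inv k f : (forall x, f x != 0) -> Ck k f -> Ck k (fun x => (f x)^-1).
Proof.
move=> nz; elim: k f nz => [|k IH] f nz /=.
  by move=> cf x; exact: (continuousV (nz x) (cf x)).
move=> [df Df]; split; first by move=> x; apply: (differentiableV (df x) (nz x)).
move=> v; rewrite (_ : 'D_v _ = fun x => (-1) * ((f x)^-1 * (f x)^-1) * 'D_v f x).
  apply: Ck_mul => //; apply: Ck_mul; first exact: Ck_cst.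
  by apply: Ck_mul; apply: IH => //; apply: CkS; split.
apply/funext => x; rewrite deriveV ?nz //; last exact: diff_derivable.
rewrite mulN1r expr2 invfM. reflexivity.
Qed.

End CkLemmas.

Lemma Ck_coord {R : realType} m n (i : 'I_m) (j : 'I_n) k :
  Ck k (fun x : 'M[R]_(m, n) => x i j).
Proof.
case: k => [|k] /=.
  by move=> x; apply: differentiable_continuous; apply: differentiable_coord.
split; first by move=> x; apply: differentiable_coord.
move=> v; rewrite (_ : 'D_v _ = fun _ => v i j); first exact: Ck_cst.
apply/funext => x; rewrite deriveE; last exact: differentiable_coord.
have @f : {linear 'M[R]_(m, n) -> R}.
  by exists (fun N : 'M[R]_(_, _) => N i j); do 2![eexists]; do ?[constructor];
     rewrite ?mxE// => ? *; rewrite ?mxE//; move=> ?; rewrite !mxE.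
rewrite (_ : (fun _ => _) = f) // diff_lin //; exact: coord_continuous.
Qed.
Definition Gm {R : realType} (rho : R) (x : 'rV[R]_2) : 'M[R]_2 :=
  \matrix_(i, j) ((1 + rho * (x ord0 (inord 0) * x ord0 (inord 0) + x ord0 (inord 1) * x ord0 (inord 1))) * ((i == j :> nat)%:R)).

Lemma Gpos {R : realType} (rho : R) (hrho : 0 < rho) x (u : 'rV[R]_2) :
  u != 0 -> 0 < (u *m Gm rho x *m u^T) ord0 ord0.
Proof.
move=> un0.
rewrite !mxE !big_ord_recr !big_ord0 /= !mxE !big_ord_recr !big_ord0 /= !mxE /=.
set a := u ord0 (widen_ord _ _). set b := u ord0 ord_max.
set y0 := x ord0 (inord 0). set y1 := x ord0 (inord 1).
have hD : 0 < 1 + rho * (y0 * y0 + y1 * y1) by nra.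
have hab : 0 < a * a + b * b.
  rewrite lt_neqAle addr_ge0 -?expr2 ?sqr_ge0 // andbT.
  rewrite eq_sym paddr_eq0 ?sqr_ge0 // !sqrf_eq0.
  apply/negP => /andP [/eqP ha /eqP hb]; move/eqP: un0; apply.
  apply/rowP => i; rewrite mxE; case: i => [[|[|k]] Hk] //.
    by rewrite -ha /a; congr (u _ _); apply: val_inj.
  by rewrite -hb /b; congr (u _ _); apply: val_inj.
have -> : forall D : R, 0 + (0 + a * (D * 1) + b * (D * 0)) * a + (0 + a * (D * 0) + b * (D * 1)) * b = D * (a * a + b * b) by move=> D; ring.
exact: mulr_gt0.
Qed.

Lemma Gpol {R : realType} (rho r phi : R) :
  (polJac r phi)^T *m Gm rho (cart2 r phi) *m polJac r phi = gpol rho r.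
Proof.
have hcs := cos2Dsin2 phi.
have e0 : cart2 r phi ord0 (inord 0) = r * cos phi by rewrite mxE inordK.
have e1 : cart2 r phi ord0 (inord 1) = r * sin phi by rewrite mxE inordK.
apply/matrixP => i j.
rewrite !mxE !big_ord_recr !big_ord0 /= !mxE !big_ord_recr !big_ord0 /= !mxE /=.
rewrite !inordK //=.
move: hcs; set c := cos phi; set s := sin phi => hcs.
have hn : r * c * (r * c) + r * s * (r * s) = r ^+ 2.
  by rewrite -[RHS]mulr1 -hcs; ring.
rewrite hn.
case: i => [[|[|i]] Hi] //; case: j => [[|[|j]] Hj] //=.
- by transitivity ((1 + rho * r^+2) * (c^+2+s^+2)); [ring | rewrite hcs mulr1].
- ring.
- ring.
- by transitivity ((1 + rho * r^+2) * r^+2 * (c^+2+s^+2)); [ring | rewrite hcs mulr1].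
Qed.
Local Notation "x _[ k ]" := (x ord0 (inord k)) (at level 8).

Ltac ck := repeat first [ apply: Ck_add | apply: Ck_mul | apply: Ck_opp
                       | apply: Ck_coord | apply: Ck_cst ].

Lemma nzD {R : realType} (rho : R) (hrho : 0 < rho) (a b : R) :
  1 + rho * (a * a + b * b) != 0.
Proof. rewrite lt0r_neq0 //; nra. Qed.

Lemma nz2D {R : realType} (rho : R) (hrho : 0 < rho) (a b : R) :
  2 * (1 + rho * (a * a + b * b)) != 0.
Proof. rewrite lt0r_neq0 //; nra. Qed.

Lemma cartT_E {R : realType} (r phi p1 p2 : R) :
  [/\ (cartT r phi p1 p2)_[0] = r * cos phi, (cartT r phi p1 p2)_[1] = r * sin phi,
      (cartT r phi p1 p2)_[2] = p1 & (cartT r phi p1 p2)_[3] = p2].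
Proof. by rewrite !mxE !inordK. Qed.

Lemma trig2 {R : realType} (phi : R) :
  cos (2 * phi) = cos phi ^+ 2 - sin phi ^+ 2 /\ sin (2 * phi) = 2 * sin phi * cos phi.
Proof.
rewrite (_ : 2 * phi = phi + phi); last by ring.
by rewrite cosD sinD; split; ring.
Qed.

Section Keys.
Context {R : realType} (rho xi c s r p1 p2 phi : R).
Hypotheses (hrho : 0 < rho) (hcs : c ^+ 2 + s ^+ 2 = 1) (hr : r != 0).
Let Pr := c * p1 + s * p2.
Let Q := - s * p1 + c * p2.

Lemma hn : r * c * (r * c) + r * s * (r * s) = r * r.
Proof. by rewrite -[RHS]mulr1 -hcs; ring. Qed.
Lemma hp : p1 * p1 + p2 * p2 = Pr ^+ 2 + Q ^+ 2.
Proof. by rewrite -[LHS]mulr1 -hcs /Pr /Q; ring. Qed.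
Lemma hpp : p1 * p2 = (c ^+ 2 - s ^+ 2) * Pr * Q + s * c * (Pr ^+ 2 - Q ^+ 2).
Proof. by transitivity ((c^+2+s^+2)^+2 * (p1 * p2)); [rewrite hcs expr1n mul1r | rewrite /Pr /Q; ring]. Qed.
Lemma hq : p1 * p1 - p2 * p2 = (c ^+ 2 - s ^+ 2) * (Pr ^+ 2 - Q ^+ 2) - 4 * s * c * Pr * Q.
Proof. by transitivity ((c^+2+s^+2)^+2 * (p1 * p1 - p2 * p2)); [rewrite hcs expr1n mul1r | rewrite /Pr /Q; ring]. Qed.

Lemma Dnz : 1 + rho * r ^+ 2 != 0.
Proof. have h : 0 <= rho * r ^+ 2 by rewrite mulr_ge0 ?sqr_ge0 ?ltW. rewrite lt0r_neq0 //; lra. Qed.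

Lemma keyH :
  (p1 * p1 + p2 * p2 + xi * (r * c * (r * c) + r * s * (r * s))) *
  (2 * (1 + rho * (r * c * (r * c) + r * s * (r * s))))^-1 =
  H0 rho xi r phi Pr (r * Q).
Proof.
have := Dnz; rewrite hn hp /H0 => hD.
field; rewrite ?hD ?hr ?mulf_neq0 ?expf_neq0 //; lra.
Qed.

Lemma keyS1 :
  p1 * p2 + r * c * (r * s) * (xi - rho * (p1 * p1 + p2 * p2)) *
  (1 + rho * (r * c * (r * c) + r * s * (r * s)))^-1 =
  (c ^+ 2 - s ^+ 2) * Pr * (r * Q / r)
  + 2 * s * c * (H0 rho xi r phi Pr (r * Q) - (r * Q) ^+ 2 / r ^+ 2).
Proof.
have := Dnz; rewrite hn hp hpp /H0 => hD.
field; rewrite ?hD ?hr ?mulf_neq0 ?expf_neq0 //; lra.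
Qed.

Lemma keyS2 :
  (p1 * p1 - p2 * p2) * 2^-1 + (r * c * (r * c) - r * s * (r * s)) * (xi - rho * (p1 * p1 + p2 * p2)) *
  (2 * (1 + rho * (r * c * (r * c) + r * s * (r * s))))^-1 =
  - (2 * s * c) * Pr * (r * Q / r)
  + (c ^+ 2 - s ^+ 2) * (H0 rho xi r phi Pr (r * Q) - (r * Q) ^+ 2 / r ^+ 2).
Proof.
have := Dnz; rewrite hn hp hq /H0 => hD.
field; rewrite ?hD ?hr ?mulf_neq0 ?expf_neq0 //; lra.
Qed.
End Keys.

Theorem theorem7 (R : realType) (rho xi : R) (hrho : 0 < rho) :
  exists (G : 'rV[R]_2 -> 'M[R]_2) (H Pphi S1 S2 : 'rV[R]_4 -> R),
    (forall i j, smooth (fun x => G x i j)) /\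
    (forall x, (G x)^T = G x) /\
    (forall x (u : 'rV[R]_2), u != 0 -> 0 < (u *m G x *m u^T) ord0 ord0) /\
    (forall r phi, 0 < r ->
       (polJac r phi)^T *m G (cart2 r phi) *m polJac r phi = gpol rho r) /\
    smooth H /\ smooth Pphi /\ smooth S1 /\ smooth S2 /\
    (forall r phi p1 p2, 0 < r ->
       let Pr := Pr_of r phi p1 p2 in
       let Pp := Pphi_of r phi p1 p2 in
       H (cartT r phi p1 p2) = H0 rho xi r phi Pr Pp /\
       Pphi (cartT r phi p1 p2) = Pp /\
       S1 (cartT r phi p1 p2) = S1pol rho xi r phi Pr Pp /\
       S2 (cartT r phi p1 p2) = S2pol rho xi r phi Pr Pp).
Proof.
exists (Gm rho).
exists (fun x : 'rV[R]_4 => (x _[2] * x _[2] + x _[3] * x _[3] + xi * (x _[0] * x _[0] + x _[1] * x _[1])) *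
   (2 * (1 + rho * (x _[0] * x _[0] + x _[1] * x _[1])))^-1).
exists (fun x : 'rV[R]_4 => x _[0] * x _[3] - x _[1] * x _[2]).
exists (fun x : 'rV[R]_4 => x _[2] * x _[3] + x _[0] * x _[1] * (xi - rho * (x _[2] * x _[2] + x _[3] * x _[3])) *
   (1 + rho * (x _[0] * x _[0] + x _[1] * x _[1]))^-1).
exists (fun x : 'rV[R]_4 => (x _[2] * x _[2] - x _[3] * x _[3]) * 2^-1 + (x _[0] * x _[0] - x _[1] * x _[1]) * (xi - rho * (x _[2] * x _[2] + x _[3] * x _[3])) *
   (2 * (1 + rho * (x _[0] * x _[0] + x _[1] * x _[1])))^-1).
split.
  move=> i j k.
  rewrite (_ : (fun x => _) = fun x : 'rV[R]_2 => (1 + rho * (x _[0] * x _[0] + x _[1] * x _[1])) * ((i == j :> nat)%:R)); last by apply/funext => x; rewrite mxE.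
  ck.
split.
  by move=> x; apply/matrixP => i j; rewrite !mxE eq_sym.
split; first by move=> x u; apply: Gpos.
split; first by move=> r phi _; apply: Gpol.
split.
  move=> k; apply: Ck_mul; first by ck.
  by apply: Ck_inv; [move=> x; apply: nz2D | ck].
split; first by move=> k; ck.
split.
  move=> k; apply: Ck_add; first by ck.
  apply: Ck_mul; first by ck.
  by apply: Ck_inv; [move=> x; apply: nzD | ck].
split.
  move=> k; apply: Ck_add; first by ck.
  apply: Ck_mul; first by ck.
  by apply: Ck_inv; [move=> x; apply: nz2D | ck].
move=> r phi p1 p2 hr /=.
have [-> -> -> ->] := cartT_E r phi p1 p2.
have hr0 : r != 0 by rewrite gt_eqF.
rewrite /Pr_of /Pphi_of /S1pol /S2pol.
have [-> ->] := trig2 phi.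
split; first by apply: keyH => //; apply: cos2Dsin2.
split; first by ring.
split.
  by apply: (@keyS1 R rho xi _ _ r p1 p2 phi) => //; apply: cos2Dsin2.
by apply: (@keyS2 R rho xi _ _ r p1 p2 phi) => //; apply: cos2Dsin2.
Qed.
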